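(* Let $\mathcal{F}$ be the family of $1$-Lipschitz functions from $[0,1]$ to $[-1,1]$. There is a universal constant $C$ such that $\mathfrak{R}_T(\mathcal{F}) \le C\sqrt{T}$ for every positive integer $T$.
   Context: The sequential Rademacher complexity of a family $\mathcal{F}$ of functions on $[0,1]$ is $\mathfrak{R}_T(\mathcal{F}) = \sup_{z_1,\ldots,z_T} \mathbb{E}_{\sigma \sim \{\pm 1\}^T}\left[\sup_{f \in \mathcal{F}} \sum_{t=1}^T \sigma_t f(z_t(\sigma_1,\ldots,\sigma_{t-1}))\right]$, where $\sigma$ is uniform on $\{\pm1\}^T$ and the outer supremum is over all tuples $(z_1,\ldots,z_T)$ with $z_t : \{\pm1\}^{t-1} \to [0,1]$. *)

(* Defs.v *)
From HB Require Import structures.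
From mathcomp Require Import all_boot all_order all_algebra.
From mathcomp Require Import all_classical all_reals.
Set Implicit Arguments. Unset Strict Implicit. Unset Printing Implicit Defensive.
Import Order.TTheory GRing.Theory Num.Theory.
Local Open Scope classical_set_scope.
Local Open Scope ring_scope.

Section SeqRad.
Variable R : realType.

Definition sgnb (b : bool) : R := if b then 1 else -1.

Definition lip_class : set (R -> R) :=
  [set f | (forall x y : R, 0 <= x <= 1 -> 0 <= y <= 1 -> `|f x - f y| <= `|x - y|)
        /\ (forall x : R, 0 <= x <= 1 -> -1 <= f x <= 1)].

(* A [0,1]-valued tree of depth T: z t s is z_{t+1}(sigma_1..sigma_t)
   for the prefix s of length t (0-based index t < T). *)
Definition is_tree (T : nat) (z : nat -> seq bool -> R) : Prop :=
  forall (t : nat) (s : seq bool), (t < T)%N -> size s = t -> 0 <= z t s <= 1.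

Definition seq_payoff (T : nat) (z : nat -> seq bool -> R) (f : R -> R)
  (sigma : T.-tuple bool) : R :=
  \sum_(t < T) sgnb (tnth sigma t) * f (z t (take t sigma)).

Definition inner_sup (F : set (R -> R)) (T : nat) (z : nat -> seq bool -> R)
  (sigma : T.-tuple bool) : R :=
  sup [set seq_payoff z f sigma | f in F].

Definition rad_avg (F : set (R -> R)) (T : nat) (z : nat -> seq bool -> R) : R :=
  (2 ^+ T)^-1 * \sum_(sigma : T.-tuple bool) inner_sup F z sigma.

Definition seq_rademacher (F : set (R -> R)) (T : nat) : R :=
  sup [set rad_avg F T z | z in is_tree T].

End SeqRad.

(* Main.v *)
Require Import Defs.
From HB Require Import structures.
From mathcomp Require Import all_boot all_order all_algebra.
From mathcomp Require Import all_classical all_reals.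
From mathcomp Require Import ring lra.
Import Order.TTheory GRing.Theory Num.Theory.
Local Open Scope ring_scope.

Section Aux.
Variable R : realType.

Definition Ssum (a : nat -> seq bool -> R) {T : nat} (s : T.-tuple bool) : R :=
  \sum_(t < T) sgnb R (tnth s t) * a t (take t s).

Lemma sum_tuple_cons T (F : T.+1.-tuple bool -> R) :
  \sum_(u : T.+1.-tuple bool) F u =
  \sum_(b : bool) \sum_(s : T.-tuple bool) F [tuple of b :: s].
Proof.
rewrite pair_big /=.
rewrite (reindex (fun p : bool * T.-tuple bool => [tuple of p.1 :: p.2])) /=.
  by apply: eq_bigr => -[b s].
exists (fun u => (thead u, [tuple of behead u])) => [[b s] _ | u _] /=.
  by congr pair; apply/val_inj.
by rewrite -tuple_eta.
Qed.

Lemma Ssum_cons a T b (s : T.-tuple bool) :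
  Ssum a [tuple of b :: s] =
  sgnb R b * a 0%N [::] + Ssum (fun t s' => a t.+1 (b :: s')) s.
Proof.
rewrite /Ssum big_ord_recl /=; congr (_ + _).
apply: eq_bigr => i _; by rewrite tnthS /bump leq0n add1n add0n.
Qed.

Lemma sum_tuple_1 T : \sum_(s : T.-tuple bool) (1 : R) = 2 ^+ T.
Proof.
elim: T => [|T IH].
  rewrite sumr_const card_tuple /=. by [].
rewrite sum_tuple_cons big_bool /= IH exprS; lra.
Qed.

Lemma Ssum0 T : forall a, \sum_(s : T.-tuple bool) Ssum a s = 0.
Proof.
elim: T => [|T IH] a.
  by apply: big1 => s _; rewrite /Ssum big_ord0.
rewrite sum_tuple_cons big_bool /=.
under eq_bigr do rewrite Ssum_cons.
under [X in _ + X]eq_bigr do rewrite Ssum_cons.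
rewrite !big_split /= !IH !addr0 /sgnb -big_split /=.
by apply: big1 => s _; lra.
Qed.

Lemma Ssum_sq T : forall a, (forall t s, `|a t s| <= 1) ->
  \sum_(s : T.-tuple bool) (Ssum a s) ^+ 2 <= 2 ^+ T * T%:R.
Proof.
elim: T => [|T IH] a ha.
  rewrite (eq_bigr (fun _ => 0)); first by rewrite big1 // mul1r.
  by move=> s _; rewrite /Ssum big_ord0 expr0n.
rewrite sum_tuple_cons big_bool /=.
have key : forall b : bool, \sum_(s : T.-tuple bool) (Ssum a [tuple of b :: s]) ^+ 2
   <= 2 ^+ T + 2 ^+ T * T%:R.
  move=> b.
  set a' := (fun t s' => a t.+1 (b :: s')).
  have ha' : forall t s, `|a' t s| <= 1 by move=> t s; apply: ha.
  have hS := IH a' ha'.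
  have h0 := Ssum0 T a'.
  set c := a 0%N [::].
  have hc : c ^+ 2 <= 1.
    have := ha 0%N [::]; rewrite -/c => h.
    rewrite -real_normK ?num_real //.
    have hn := normr_ge0 c. nra.
  under eq_bigr do rewrite Ssum_cons -/c -/a'.
  have -> : \sum_(s : T.-tuple bool) (sgnb R b * c + Ssum a' s) ^+ 2 =
     \sum_(s : T.-tuple bool) c ^+ 2 + (2 * sgnb R b * c) * \sum_(s : T.-tuple bool) Ssum a' s
     + \sum_(s : T.-tuple bool) (Ssum a' s) ^+ 2.
    rewrite mulr_sumr -!big_split /=; apply: eq_bigr => s _.
    rewrite /sgnb; case: (b); rewrite /=; ring.
  rewrite h0 mulr0 addr0.
  have : \sum_(s : T.-tuple bool) c ^+ 2 <= \sum_(s : T.-tuple bool) (1:R).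
    by apply: ler_sum.
  rewrite sum_tuple_1. lra.
have := key true; have := key false.
rewrite exprS mulrSr. 
move=> h1 h2.
have e : (T.+1%:R : R) = T%:R + 1 by rewrite natr1.
rewrite e.
have : 0 <= 2 ^+ T :> R by apply: exprn_ge0.
nra.
Qed.

Lemma Ssum_abs T a : (forall t s, `|a t s| <= 1) ->
  \sum_(s : T.-tuple bool) `|Ssum a s| <= 2 ^+ T * Num.sqrt T%:R.
Proof.
move=> ha.
case: T a ha => [|T] a ha.
  rewrite (eq_bigr (fun _ => 0)); first by rewrite big1 // sqrtr0 mulr0.
  by move=> s _; rewrite /Ssum big_ord0 normr0.
set q := Num.sqrt T.+1%:R.
have qpos : 0 < q by rewrite sqrtr_gt0 ltr0n.
have qq : q ^+ 2 = T.+1%:R by rewrite sqr_sqrtr // ler0n.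
have pt : forall s : T.+1.-tuple bool, 2 * q * `|Ssum a s| <= (Ssum a s) ^+ 2 + T.+1%:R.
  move=> s; rewrite -real_normK ?num_real // -qq.
  have := sqr_ge0 (`|Ssum a s| - q). lra.
have h : \sum_(s : T.+1.-tuple bool) 2 * q * `|Ssum a s| <=
    \sum_(s : T.+1.-tuple bool) ((Ssum a s) ^+ 2 + T.+1%:R * 1).
  by apply: ler_sum => s _; rewrite mulr1; exact: pt.
rewrite -mulr_sumr big_split /= -mulr_sumr sum_tuple_1 in h.
have hs := Ssum_sq T.+1 a ha.
have h2 : 0 <= 2 ^+ T.+1 :> R by apply: exprn_ge0.
rewrite -qq in h hs.
have h3 : (2 * q) * (\sum_(s : T.+1.-tuple bool) `|Ssum a s|) <= (2 * q) * (2 ^+ T.+1 * q).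
  apply: (le_trans h).
  rewrite expr2 in hs. lra.
by rewrite ler_pM2l in h3; [exact: h3 | lra].
Qed.


Definition ind (N i : nat) (x : R) : R := if i%:R / N%:R <= x then 1 else 0.
Definition cc (f : R -> R) (N i : nat) : R :=
  f (i%:R / N%:R) - (if i is j.+1 then f (j%:R / N%:R) else 0).
Definition hh (f : R -> R) (N : nat) (x : R) : R :=
  \sum_(0 <= i < N.+1) cc f N i * ind N i x.

Lemma tele f N k : \sum_(0 <= i < k.+1) cc f N i = f (k%:R / N%:R).
Proof.
elim: k => [|k IH]; first by rewrite big_nat1 /cc subr0.
by rewrite big_nat_recr //= IH /cc addrC subrK.
Qed.

Lemma in01 {N i : nat} : (0 < N)%N -> (i <= N)%N -> 0 <= (i%:R / N%:R : R) <= 1.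
Proof.
move=> Np iN; apply/andP; split; first by rewrite divr_ge0.
by rewrite ler_pdivrMr ?ltr0n // mul1r ler_nat.
Qed.

Lemma ind_norm N i x : `|ind N i x| <= 1.
Proof. by rewrite /ind; case: ifP; rewrite ?normr1 ?normr0. Qed.

Lemma hh_eq f N x : (0 < N)%N -> 0 <= x <= 1 ->
  (Num.truncn (x * N%:R) <= N)%N /\
  hh f N x = f ((Num.truncn (x * N%:R))%:R / N%:R).
Proof.
move=> Np /andP[x0 x1].
have xN0 : 0 <= x * N%:R by rewrite mulr_ge0.
have kN : (Num.truncn (x * N%:R) <= N)%N.
  rewrite truncn_le_nat.
  have : (N%:R : R) < N.+1%:R by rewrite ltr_nat.
  have : 0 <= (N%:R : R) by [].
  nra.
split => //.
rewrite /hh (@big_cat_nat _ _ _ (Num.truncn (x * N%:R)).+1) //=.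
rewrite [X in _ + X]big_nat_cond [X in _ + X]big1 ?addr0; last first.
  move=> i /andP[/andP[hi _] _].
  rewrite /ind ler_pdivrMr ?ltr0n // -(truncn_ge_nat _ xN0).
  by rewrite leqNgt hi mulr0.
rewrite -tele; apply: eq_big_nat => i /andP[_ hi].
by rewrite /ind ler_pdivrMr ?ltr0n // -(truncn_ge_nat _ xN0) -ltnS hi mulr1.
Qed.

Lemma approx f N x : lip_class f -> (0 < N)%N -> 0 <= x <= 1 ->
  `|f x - hh f N x| <= N%:R^-1.
Proof.
move=> [hL hB] Np hx.
have [kN ->] := @hh_eq f N x Np hx.
set k := Num.truncn (x * N%:R).
apply: (le_trans (hL _ _ hx (in01 Np kN))).
move: hx => /andP[x0 x1].
have xN0 : 0 <= x * N%:R by rewrite mulr_ge0.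
have := truncn_itv xN0; rewrite -/k -natr1 => /andP[h1 h2].
have npos : (0 : R) < N%:R by rewrite ltr0n.
set n := (N%:R : R) in npos h1 h2 *.
set y := x * n in h1 h2 xN0.
have hxe : x = y / n by rewrite /y mulrK // unitfE gt_eqF.
rewrite hxe -mulrBl normrM (gtr0_norm (x:=n^-1)); last by rewrite invr_gt0.
rewrite -[X in _ <= X]mul1r ler_wpM2r ?invr_ge0 ?ltW //.
rewrite ltr_norml; apply/andP; split; lra.
Qed.


Lemma cc0 f N : lip_class f -> `|cc f N 0| <= 1.
Proof.
move=> [_ hB]; rewrite /cc subr0 mul0r ler_norml.
by apply: hB; rewrite lexx ler01.
Qed.

Lemma ccS f N j : lip_class f -> (0 < N)%N -> (j.+1 <= N)%N ->
  `|cc f N j.+1| <= N%:R^-1.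
Proof.
move=> [hL _] Np hj.
rewrite /cc; apply: (le_trans (hL _ _ (in01 Np hj) (in01 Np (ltnW hj)))).
have -> : j.+1%:R / N%:R - j%:R / N%:R = (N%:R : R)^-1.
  by rewrite -natr1 mulrDl mul1r addrAC subrr add0r.
by rewrite ger0_norm // invr_ge0.
Qed.

Definition Bnd {T} (z : nat -> seq bool -> R) N (sigma : T.-tuple bool) : R :=
  `|Ssum (fun t s => ind N 0 (z t s)) sigma|
  + \sum_(1 <= i < N.+1) N%:R^-1 * `|Ssum (fun t s => ind N i (z t s)) sigma|
  + T%:R / N%:R.

Lemma payoff_le T z f N (sigma : T.-tuple bool) : is_tree T z -> lip_class f ->
  (0 < N)%N -> seq_payoff z f sigma <= Bnd z N sigma.
Proof.
move=> hz hf Np.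
have hx : forall t : 'I_T, 0 <= z t (take t sigma) <= 1.
  move=> t; apply: hz; first exact: ltn_ord.
  by rewrite size_takel // size_tuple ltnW.
have e1 : seq_payoff z f sigma =
   \sum_(t < T) sgnb R (tnth sigma t) * hh f N (z t (take t sigma))
   + \sum_(t < T) sgnb R (tnth sigma t) * (f (z t (take t sigma)) - hh f N (z t (take t sigma))).
  by rewrite /seq_payoff -big_split /=; apply: eq_bigr => t _; ring.
rewrite e1 /Bnd; apply: lerD.
  have e2 : \sum_(t < T) sgnb R (tnth sigma t) * hh f N (z t (take t sigma)) =
     \sum_(0 <= i < N.+1) cc f N i * Ssum (fun t s => ind N i (z t s)) sigma.
    rewrite /hh; under eq_bigr do rewrite mulr_sumr.
    rewrite exchange_big /=; apply: eq_bigr => i _.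
    by rewrite /Ssum mulr_sumr; apply: eq_bigr => t _; ring.
  rewrite e2 big_ltn //; apply: lerD.
    apply: (le_trans (ler_norm _)); rewrite normrM.
    rewrite -[X in _ <= X]mul1r ler_wpM2r //; exact: cc0.
  apply: ler_sum_nat => i /andP[hi1 hi2].
  case: i hi1 hi2 => [//|j] _ hj.
  apply: (le_trans (ler_norm _)); rewrite normrM.
  by rewrite ler_wpM2r //; apply: ccS.
apply: (le_trans (ler_norm _)); apply: (le_trans (ler_norm_sum _ _ _)).
have -> : T%:R / N%:R = \sum_(t < T) (N%:R : R)^-1.
  by rewrite sumr_const card_ord mulrC mulr_natr.
apply: ler_sum => t _; rewrite normrM.
have -> : `|sgnb R (tnth sigma t)| = 1 by rewrite /sgnb; case: ifP; rewrite ?normrN normr1.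
rewrite mul1r; apply: approx => //.
Qed.

Lemma rad_avg_le T z : (0 < T)%N -> is_tree T z ->
  rad_avg (@lip_class R) T z <= 3 * Num.sqrt T%:R.
Proof.
move=> Tp hz.
have ib : forall sigma : T.-tuple bool,
    inner_sup (@lip_class R) z sigma <= Bnd z T sigma.
  move=> sigma; apply: ge_sup.
    exists (seq_payoff z (fun=> 0) sigma); exists (fun=> 0) => //.
    split=> [x y _ _|x _]; first by rewrite subrr normr0.
    by rewrite lerN10 ler01.
  by move=> _ [f hf <-]; apply: payoff_le.
have hsum : \sum_(sigma : T.-tuple bool) inner_sup (@lip_class R) z sigma
    <= \sum_(sigma : T.-tuple bool) Bnd z T sigma.
  by apply: ler_sum => s _; apply: ib.
set q := Num.sqrt T%:R.
have q1 : 1 <= q.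
  have qq : q ^+ 2 = T%:R by rewrite sqr_sqrtr // ler0n.
  have q0 : 0 <= q := sqrtr_ge0 _.
  have : (1 : R) <= T%:R by rewrite ler1n.
  rewrite -qq; nra.
have hB : \sum_(sigma : T.-tuple bool) Bnd z T sigma <= 2 ^+ T * (3 * q).
  rewrite /Bnd !big_split /=.
  have A0 := Ssum_abs T (fun t s => ind T 0 (z t s)) (fun t s => ind_norm _ _ _).
  have A1 : \sum_(sigma : T.-tuple bool) \sum_(1 <= i < T.+1)
       T%:R^-1 * `|Ssum (fun t s => ind T i (z t s)) sigma| <= 2 ^+ T * q.
    rewrite exchange_big /=.
    apply: (le_trans (y := \sum_(1 <= i < T.+1) T%:R^-1 * (2 ^+ T * q))).
      apply: ler_sum_nat => i _; rewrite -mulr_sumr ler_wpM2l ?invr_ge0 //.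
      exact: Ssum_abs (fun t s => ind_norm _ _ _).
    rewrite sumr_const_nat subSS subn0 -[_ *+ T]mulr_natl mulrA mulfV ?mul1r //.
    by rewrite pnatr_eq0 -lt0n.
  have A2 : \sum_(sigma : T.-tuple bool) (T%:R / T%:R : R) = 2 ^+ T.
    by rewrite mulfV ?pnatr_eq0 -?lt0n // sum_tuple_1.
  rewrite -/q in A0.
  rewrite A2.
  have H := lerD (lerD A0 A1) (lexx (2 ^+ T : R)).
  refine (le_trans H _).
  have h2 : 0 <= 2 ^+ T :> R by apply: exprn_ge0.
  nra.
rewrite /rad_avg.
have h2 : 0 < 2 ^+ T :> R by apply: exprn_gt0.
rewrite ler_pdivrMl //.
rewrite mulrC; apply: (le_trans hsum); rewrite mulrC; exact: hB.
Qed.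

End Aux.

Theorem lemma5 (R : realType) :
  exists C : R, forall T : nat, (0 < T)%N ->
    @seq_rademacher R (@lip_class R) T <= C * Num.sqrt (T%:R).
Proof.
exists 3 => T Tp.
apply: ge_sup.
  exists (rad_avg (@lip_class R) T (fun _ _ => 0)); exists (fun _ _ => 0) => //.
  by move=> t s _ _; rewrite lexx ler01.
by move=> _ [z hz <-]; apply: rad_avg_le.
Qed.
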